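(* Let $X=\mathbb S^{n_1}\times\cdots\times\mathbb S^{n_l}$ with $1\le n_1<\cdots<n_l$, and let $f:X\to X$ be a $C^1$ quasi-unipotent map such that $a_{n_1},\ldots,a_{n_l}$ are the basic eigenvalues of $f_*$ (so each $a_{n_i}=\pm1$). Then: (a) if $(-1)^{n_i}a_{n_i}=1$ for all $1\le i\le l$, then $\mathrm{MPer}_L(f)=\{1\}$; (b) if $(-1)^{n_i}a_{n_i}=-1$ for some $1\le i\le l$, then $\mathrm{MPer}_L(f)=\emptyset$.
   Context: Basic eigenvalues: integers $a_{n_1},\ldots,a_{n_l}$ such that for every $k$ the induced map $f_{*k}$ on $H_k(X;\mathbb Q)$ is diagonal in a suitable basis with diagonal entries (with multiplicity) the products $a_{n_{i_1}}\cdots a_{n_{i_s}}$ over all subsets $\{i_1<\cdots<i_s\}$ with $n_{i_1}+\cdots+n_{i_s}=k$. A map is quasi-unipotent if all eigenvalues of all $f_{*k}$ are roots of unity. The Lefschetz zeta function is $\zeta_f(t)=\exp(\sum_{m\ge1}L(f^m)t^m/m)$ with $L(f)=\sum_k(-1)^k\operatorname{trace} f_{*k}$. If $\zeta_f(t)\ne1$, it can be written (possibly in several ways) as a finite product $\zeta_f(t)=\prod_{i=1}^{N}(1+\Delta_i t^{r_i})^{m_i}$ with $\Delta_i\in\{\pm1\}$, $r_i$ positive integers and $m_i$ nonzero integers; the minimal set of Lefschetz periods $\mathrm{MPer}_L(f)$ is the intersection of the sets $\{r_1,\ldots,r_N\}$ over all such representations. If $\zeta_f(t)=1$, $\mathrm{MPer}_L(f):=\emptyset$.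 *)

(* Defs.v *)
From HB Require Import structures.
From mathcomp Require Import all_boot all_order all_algebra all_field.
Set Implicit Arguments. Unset Strict Implicit. Unset Printing Implicit Defensive.
Import Order.TTheory GRing.Theory Num.Theory.
Local Open Scope ring_scope.

(* Product of spheres X = S^{n_0} x ... x S^{n_(l-1)}, with n : 'I_l -> nat.
   A basis of H_k(X;Q) is indexed by the subsets S of {0..l-1} with
   sum_{i in S} n_i = k. *)
Definition Sk (l : nat) (n : 'I_l -> nat) (k : nat) : {set {set 'I_l}} :=
  [set S : {set 'I_l} | (\sum_(i in S) n i)%N == k].

Definition topdeg (l : nat) (n : 'I_l -> nat) : nat := (\sum_(i < l) n i)%N.

(* f_{*k} : H_k(X;Q) -> H_k(X;Q), as a family of rational square matrices. *)
Definition hom_data (l : nat) (n : 'I_l -> nat) :=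
  forall k : nat, 'M[rat]_(#|Sk n k|).

Definition basic_eigenvalues (l : nat) (n : 'I_l -> nat) (M : hom_data n)
    (a : 'I_l -> int) : Prop :=
  forall k : nat, exists P : 'M[rat]_(#|Sk n k|),
    P \in unitmx /\
    P *m M k *m invmx P =
      diag_mx (\row_j \prod_(i in @enum_val _ (pred_of_set (Sk n k)) j) (a i)%:~R).

Definition quasi_unipotent (l : nat) (n : 'I_l -> nat) (M : hom_data n) : Prop :=
  forall (k : nat) (z : algC), root (char_poly (map_mx (ratr : rat -> algC) (M k))) z ->
    exists m : nat, (0 < m)%N /\ z ^+ m = 1.

Definition lefschetz (l : nat) (n : 'I_l -> nat) (M : hom_data n) (m : nat) : rat :=
  \sum_(k < (topdeg n).+1) (-1) ^+ k * \tr (M k ^+ m).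

(* Formal power series are represented by their coefficient sequences.
   g(t) = sum_{m>=1} L_m t^m / m, truncated below degree N. *)
Definition log_zeta_trunc (L : nat -> rat) (N : nat) : {poly rat} :=
  \poly_(i < N) (if i == 0%N then 0 else L i / i%:R).

(* coefficient of t^j in zeta(t) = exp(sum_{m>=1} L_m t^m/m) *)
Definition zeta_coef (L : nat -> rat) (j : nat) : rat :=
  (\sum_(k < j.+1) (log_zeta_trunc L j.+1) ^+ k * (k`!%:R)^-1)`_j.

Definition zeta_is_one (L : nat -> rat) : Prop :=
  forall j : nat, zeta_coef L j = (j == 0%N)%:R.

(* a factor (1 + Delta t^r)^e is encoded as ((d, r), e) with Delta = (-1)^d *)
Definition factor_ok (x : bool * nat * int) : bool :=
  (0 < x.1.2)%N && (x.2 != 0).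

Definition factor_base (x : bool * nat * int) : {poly rat} :=
  1 + ((-1) ^+ x.1.1) *: 'X^(x.1.2).

Definition pos_part (s : seq (bool * nat * int)) : {poly rat} :=
  \prod_(x <- s | 0 < x.2) factor_base x ^+ `|x.2|%N.

Definition neg_part (s : seq (bool * nat * int)) : {poly rat} :=
  \prod_(x <- s | x.2 < 0) factor_base x ^+ `|x.2|%N.

(* zeta(t) = prod_i (1 + Delta_i t^{r_i})^{m_i} as formal power series,
   written equivalently (multiplying by the invertible factors with m_i<0) as
   zeta(t) * prod_{m_i<0} (1+Delta_i t^{r_i})^{-m_i} = prod_{m_i>0} (...)^{m_i}. *)
Definition zeta_rep (L : nat -> rat) (s : seq (bool * nat * int)) : Prop :=
  all factor_ok s /\
  forall j : nat,
    \sum_(i < j.+1) zeta_coef L i * (neg_part s)`_(j - i) = (pos_part s)`_j.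

Definition MPerL (L : nat -> rat) (r : nat) : Prop :=
  ~ zeta_is_one L /\
  forall s : seq (bool * nat * int), zeta_rep L s -> r \in [seq x.1.2 | x <- s].

(* Main.v *)
Require Import Defs.
From HB Require Import structures.
From mathcomp Require Import all_boot all_order all_algebra all_field.
From mathcomp Require Import ring zify.
Import Order.TTheory GRing.Theory Num.Theory.
Local Open Scope ring_scope.

Definition eqK (K : nat) (p q : {poly rat}) := forall i, (i < K)%N -> p`_i = q`_i.

Lemma eqK_refl K p : eqK K p p. Proof. by []. Qed.
Lemma eqK_sym K p q : eqK K p q -> eqK K q p. Proof. by move=> h i hi; rewrite h. Qed.
Lemma eqK_trans K p q r : eqK K p q -> eqK K q r -> eqK K p r.
Proof. by move=> h1 h2 i hi; rewrite h1 // h2. Qed.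
Lemma eqK_add K p q p' q' : eqK K p p' -> eqK K q q' -> eqK K (p + q) (p' + q').
Proof. by move=> h1 h2 i hi; rewrite !coefD h1 // h2. Qed.
Lemma eqK_mul K p q p' q' : eqK K p p' -> eqK K q q' -> eqK K (p * q) (p' * q').
Proof.
move=> h1 h2 i hi; rewrite !coefM; apply: eq_bigr => j _.
rewrite h1 ?h2 //; first by apply: leq_ltn_trans hi; apply: leq_subr.
by apply: leq_ltn_trans hi; rewrite -ltnS.
Qed.
Lemma eqK_exp K p q e : eqK K p q -> eqK K (p ^+ e) (q ^+ e).
Proof.
move=> h; elim: e => [|e IH]; first exact: eqK_refl.
by rewrite !exprS; apply: eqK_mul.
Qed.

Lemma coef_exp_low (G : {poly rat}) k i : G`_0 = 0 -> (i < k)%N -> (G ^+ k)`_i = 0.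
Proof.
move=> G0; elim: k i => [//|k IH] i hi.
rewrite exprS coefM big1 // => [[j hj]] _ /=.
case: j hj => [|j] hj; first by rewrite G0 mul0r.
rewrite IH ?mulr0 //.
by move: hi hj; rewrite !ltnS => hi hj; rewrite ltn_subLR // addSn ltnS; apply: leq_trans hi (leq_addl _ _).
Qed.

Section Zeta.
Variable L : nat -> rat.
Local Notation G := (log_zeta_trunc L).

Definition Fp (J : nat) : {poly rat} :=
  \sum_(k < J.+1) ((k`!)%:R^-1 : rat) *: (G J.+1) ^+ k.

Lemma zeta_coefE j : zeta_coef L j = (Fp j)`_j.
Proof.
rewrite /zeta_coef /Fp; apply: (congr1 (fun p : {poly rat} => p`_j)).
apply: eq_bigr => k _.
by rewrite -polyC_natr polyCV mulrC mul_polyC.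
Qed.

Lemma G0 K : (G K)`_0 = 0.
Proof. by rewrite /log_zeta_trunc coef_poly; case: K. Qed.

Lemma GE K i : (i < K)%N -> (G K)`_i = if i == 0%N then 0 else L i / i%:R.
Proof. by move=> h; rewrite /log_zeta_trunc coef_poly h. Qed.

Lemma eqK_G K K' : (K <= K')%N -> eqK K (G K') (G K).
Proof. by move=> h i hi; rewrite !GE //; apply: leq_trans h. Qed.

Lemma Fp_indep J i : (i <= J)%N -> (Fp J)`_i = (Fp i)`_i.
Proof.
move=> hij; rewrite /Fp !coef_sum.
rewrite (bigID (fun k : 'I_J.+1 => (k < i.+1)%N)) /=.
rewrite [X in _ + X]big1 ?addr0; last first.
  move=> k; rewrite -leqNgt => hk.
  by rewrite coefZ coef_exp_low ?mulr0 // G0.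
rewrite (big_ord_widen J.+1 (fun k => (((k`!)%:R^-1 : rat) *: (G i.+1) ^+ k)`_i)); last by rewrite ltnS.
apply: eq_bigr => k hk.
rewrite !coefZ; congr (_ * _); apply: (eqK_exp i.+1) => //.
by apply: eqK_G.
Qed.

Lemma zeta0 : zeta_coef L 0 = 1.
Proof.
by rewrite zeta_coefE /Fp big_ord_recr big_ord0 /= add0r expr0 coefZ coefC /= invr1 mulr1.
Qed.

Lemma Fp_deriv j :
  (Fp j.+1)^`() = (\sum_(k < j.+1) ((k`!)%:R^-1 : rat) *: (G j.+2) ^+ k) * (G j.+2)^`().
Proof.
rewrite /Fp raddf_sum big_ord_recl /= expr0 derivZ derivC scaler0 add0r mulr_suml.
apply: eq_bigr => k _ /=.
rewrite derivZ deriv_exp /= -scalerMnr scalerMnl -scalerAl mulrC; congr (_ *: _).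
rewrite factS natrM invfM -mulr_natr /bump /= add1n.
have h1 : (k`!)%:R != 0 :> rat by rewrite pnatr_eq0 -lt0n fact_gt0.
have h2 : (k.+1)%:R != 0 :> rat by rewrite pnatr_eq0.
by field; rewrite h1 /= addrC natr1.
Qed.

Lemma zeta_rec j :
  j.+1%:R * zeta_coef L j.+1 = \sum_(i < j.+1) zeta_coef L i * L (j.+1 - i).
Proof.
have := congr1 (fun p : {poly rat} => p`_j) (Fp_deriv j).
rewrite /= coef_deriv => H.
rewrite zeta_coefE mulr_natl H.
rewrite coefM; apply: eq_bigr => [[i hi]] _ /=.
rewrite coef_deriv GE /=; last by lia.
have hij : (i <= j)%N by rewrite -ltnS.
rewrite (subSn hij).
have -> : ((\sum_(k < j.+1) ((k`!)%:R^-1 : rat) *: G j.+2 ^+ k)`_i) = (Fp j.+1)`_i.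
  rewrite /Fp [in RHS]big_ord_recr /= coefD [X in _ = _ + X]coefZ.
  by rewrite coef_exp_low ?G0 ?mulr0 ?addr0.
rewrite zeta_coefE Fp_indep; last by apply: ltnW.
congr (_ * _); rewrite -[LHS]mulr_natr divfK //.
by rewrite pnatr_eq0.
Qed.

End Zeta.



Arguments eqK_trans {K p q r}.
Arguments eqK_add {K p q p' q'}.
Arguments eqK_mul {K p q p' q'}.

Lemma eqK_eq K (p q : {poly rat}) : p = q -> eqK K p q. Proof. by move=> ->. Qed.

Definition Dp (p : {poly rat}) := 'X * p^`().

Lemma coef_Dp p i : (Dp p)`_i = i%:R * p`_i.
Proof. by rewrite /Dp coefXM; case: i => [|i] /=; rewrite ?mul0r // coef_deriv mulr_natl. Qed.

Lemma DpM p q : Dp (p * q) = Dp p * q + p * Dp q.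
Proof. by rewrite /Dp derivM; ring. Qed.

Lemma DpB p q : Dp (p - q) = Dp p - Dp q.
Proof. by rewrite /Dp derivB mulrBr. Qed.

Lemma uniqK K (A B Lam : {poly rat}) : Lam`_0 = 0 -> A`_0 = B`_0 ->
  eqK K (Dp A) (A * Lam) -> eqK K (Dp B) (B * Lam) -> eqK K A B.
Proof.
move=> L0 AB0 hA hB.
suff h : forall k i, (i < k)%N -> (i < K)%N -> (A - B)`_i = 0.
  by move=> i hi; apply/eqP; rewrite -subr_eq0 -coefB; apply/eqP; apply: (h i.+1).
elim=> [//|k IH] [|i] hik hiK; first by rewrite coefB AB0 subrr.
have e : i.+1%:R * (A - B)`_i.+1 = ((A - B) * Lam)`_i.+1.
  by rewrite -coef_Dp DpB coefB hA // hB // -coefB mulrBl.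
move: e; rewrite coefM big_ord_recr /= subnn L0 mulr0 addr0 big1.
  by move/eqP; rewrite mulf_eq0 pnatr_eq0 /= => /eqP.
move=> [m hm] _ /=; rewrite IH ?mul0r //; first by lia.
by apply: ltn_trans hiK.
Qed.

Definition lamc (d : bool) (r i : nat) : rat :=
  if (0 < i)%N && (r %| i)%N then - (r%:R) * (- (-1) ^+ d) ^+ (i %/ r)%N else 0.

Lemma lamc0 d r : lamc d r 0 = 0. Proof. by []. Qed.

Definition lam (x : bool * nat * int) (K : nat) : {poly rat} :=
  \poly_(i < K) lamc x.1.1 x.1.2 i.

Lemma fb_logder K x : (0 < x.1.2)%N ->
  eqK K (Dp (factor_base x)) (factor_base x * lam x K).
Proof.
case: x => [[d r] e] /= hr j hj.
rewrite /factor_base /lam /= coef_Dp mulrDl mul1r -scalerAl coefD coefZ.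
rewrite coefD coefZ coefXnM coef1 coefXn !coef_poly hj.
have lam0 : lamc d r 0 = 0 by [].
case: (ltngtP j r) => hjr.
- case: j hj hjr => [|j] hj hjr; first by rewrite mul0r mulr0 addr0.
  have -> : lamc d r j.+1 = 0.
    rewrite /lamc /=; case: ifP => // hd.
    by have := dvdn_leq (ltn0Sn j) hd; lia.
  rewrite /=; ring.
- have -> : (j - r < K)%N = true by lia.
  have -> : (j == 0)%N = false by lia.
  rewrite /= mulr0 addr0 mulr0.
  have -> : j = (r + (j - r))%N by lia.
  have hj' : (0 < j - r)%N by lia.
  rewrite addKn /lamc addn_gt0 hr hj' /= dvdn_addr ?dvdnn //.
  case: ifP => hd; last by rewrite mulr0 addr0.
  rewrite divnDl ?dvdnn // divnn hr add1n exprS; ring.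
- subst j; rewrite subnn (leq_ltn_trans (leq0n r) hj) lam0 mulr0 addr0.
  rewrite /lamc hr dvdnn divnn hr expr1 /=.
  case: r hr {hj lam0} => // r _.
  rewrite /=; ring.
Qed.

Lemma pow_logder K (f lm : {poly rat}) e :
  eqK K (Dp f) (f * lm) -> eqK K (Dp (f ^+ e)) (f ^+ e * (lm *+ e)).
Proof.
move=> h; elim: e => [|e IH].
  by move=> i hi; rewrite expr0 /Dp derivC mulr0 mulr0n mulr0.
rewrite exprSr DpM.
apply: eqK_trans (eqK_add (eqK_mul IH (eqK_refl K f)) (eqK_mul (eqK_refl K (f ^+ e)) h)) _.
apply: eqK_eq; rewrite mulrSr; ring.
Qed.

Lemma prod_logder K (T : eqType) (s : seq T) (P : pred T) (F Lm : T -> {poly rat}) :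
  (forall x, x \in s -> P x -> eqK K (Dp (F x)) (F x * Lm x)) ->
  eqK K (Dp (\prod_(x <- s | P x) F x)) ((\prod_(x <- s | P x) F x) * \sum_(x <- s | P x) Lm x).
Proof.
elim: s => [|y s IH] h.
  by rewrite !big_nil /Dp derivC mulr0 mulr0.
rewrite !big_cons; case: ifP => hP; last first.
  by apply: IH => x hx; apply: h; rewrite inE hx orbT.
rewrite DpM.
have h1 := h y (mem_head _ _) hP.
have h2 : eqK K (Dp (\prod_(x <- s | P x) F x)) ((\prod_(x <- s | P x) F x) * \sum_(x <- s | P x) Lm x).
  by apply: IH => x hx; apply: h; rewrite inE hx orbT.
apply: eqK_trans (eqK_add (eqK_mul h1 (eqK_refl K _)) (eqK_mul (eqK_refl K (F y)) h2)) _.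
apply: eqK_eq; ring.
Qed.

Lemma coef0_prod (T : eqType) (s : seq T) (P : pred T) (F : T -> {poly rat}) :
  (forall x, x \in s -> P x -> (F x)`_0 = 1) -> (\prod_(x <- s | P x) F x)`_0 = 1.
Proof.
elim: s => [|y s IH] h; first by rewrite big_nil coef1.
have sub : {subset s <= y :: s} by move=> z hz; rewrite inE hz orbT.
have IH' := IH (fun x hx => h x (sub x hx)).
rewrite big_cons; case: ifP => hP //.
by rewrite coef0M h ?mem_head // IH' mul1r.
Qed.

Lemma coef01_prod (T : eqType) (s : seq T) (P : pred T) (F : T -> {poly rat}) :
  (forall x, x \in s -> P x -> (F x)`_0 = 1 /\ (F x)`_1 = 0) ->
  (\prod_(x <- s | P x) F x)`_0 = 1 /\ (\prod_(x <- s | P x) F x)`_1 = 0.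
Proof.
elim: s => [|y s IH] h; first by rewrite big_nil !coef1.
have sub : {subset s <= y :: s} by move=> z hz; rewrite inE hz orbT.
have IH' := IH (fun x hx => h x (sub x hx)).
rewrite big_cons; case: ifP => hP //.
have [a0 a1] := h y (mem_head _ _) hP; case: IH' => b0 b1.
rewrite coef0M a0 b0 mulr1; split => //.
by rewrite coefM big_ord_recr big_ord_recr big_ord0 /= a0 a1 b0 b1; ring.
Qed.

Lemma mul01 (p q : {poly rat}) : p`_0 = 1 /\ p`_1 = 0 -> q`_0 = 1 /\ q`_1 = 0 ->
  (p * q)`_0 = 1 /\ (p * q)`_1 = 0.
Proof.
move=> [a0 a1] [b0 b1]; rewrite coef0M a0 b0 mulr1; split => //.
by rewrite coefM big_ord_recr big_ord_recr big_ord0 /= a0 a1 b0 b1; ring.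
Qed.

Lemma exp01 (p : {poly rat}) e : p`_0 = 1 /\ p`_1 = 0 -> (p ^+ e)`_0 = 1 /\ (p ^+ e)`_1 = 0.
Proof.
move=> h; elim: e => [|e IH]; first by rewrite expr0 !coef1.
by rewrite exprS; apply: mul01.
Qed.

Lemma exp0 (p : {poly rat}) e : p`_0 = 1 -> (p ^+ e)`_0 = 1.
Proof.
move=> h; elim: e => [|e IH]; first by rewrite expr0 !coef1.
by rewrite exprS coef0M h IH mulr1.
Qed.

Lemma fb0 x : (0 < x.1.2)%N -> (factor_base x)`_0 = 1.
Proof.
by case: x => [[d r] e] /= hr; rewrite /factor_base coefD coef1 coefZ coefXn /=; case: r hr => // r _; rewrite mulr0 addr0.
Qed.

Lemma fb01 x : (1 < x.1.2)%N -> (factor_base x)`_0 = 1 /\ (factor_base x)`_1 = 0.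
Proof.
case: x => [[d r] e] /= hr; rewrite /factor_base !coefD !coef1 !coefZ !coefXn /=.
by case: r hr => // [[|r]] _ //=; rewrite mulr0 addr0 add0r.
Qed.

Lemma int_split (e : int) (c : rat) :
  e%:~R * c = (if 0 < e then c *+ `|e|%N else 0) - (if e < 0 then c *+ `|e|%N else 0).
Proof.
case: e => [[|k]|k] /=.
- by rewrite mul0r subrr.
- by rewrite subr0 mulr_natl.
- by rewrite add0r NegzE mulrNz mulNr mulr_natl.
Qed.

Lemma rep_ok (L : nat -> rat) (s : seq (bool * nat * int)) :
  all (fun x => 0 < x.1.2)%N s ->
  (forall i, (0 < i)%N -> L i = \sum_(x <- s) x.2%:~R * lamc x.1.1 x.1.2 i) ->
  forall j, \sum_(i < j.+1) zeta_coef L i * (neg_part s)`_(j - i) = (pos_part s)`_j.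
Proof.
move=> hall hL j.
pose K := j.+1.
pose Z := \poly_(i < K) zeta_coef L i.
pose LL := \poly_(i < K) (if i == 0%N then 0 else L i).
pose P := pos_part s; pose Q := neg_part s.
pose Lp := \sum_(x <- s | 0 < x.2) lam x K *+ `|x.2|%N.
pose Lq := \sum_(x <- s | x.2 < 0) lam x K *+ `|x.2|%N.
have hr : forall x, x \in s -> (0 < x.1.2)%N by move=> x hx; exact: (allP hall x hx).
have hP : eqK K (Dp P) (P * Lp).
  by apply: prod_logder => x hx _; apply: pow_logder; apply: fb_logder; apply: hr.
have hQ : eqK K (Dp Q) (Q * Lq).
  by apply: prod_logder => x hx _; apply: pow_logder; apply: fb_logder; apply: hr.
have hZ : eqK K (Dp Z) (Z * LL).
  move=> i hi; rewrite coef_Dp coefM coef_poly hi.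
  case: i hi => [|i] hi.
    by rewrite big_ord1 /= !coef_poly /= mul0r mulr0.
  rewrite zeta_rec [RHS]big_ord_recr /= subnn [LL`_0]coef_poly /= mulr0 addr0.
  apply: eq_bigr => [[m hm]] _ /=; rewrite !coef_poly.
  have -> : (m < K)%N by rewrite /K; lia.
  have -> : (i.+1 - m < K)%N by rewrite /K; lia.
  by have -> : (i.+1 - m == 0)%N = false by lia.
have hL' : eqK K (LL + Lq) Lp.
  move=> i hi; rewrite coefD !coef_sum coef_poly hi.
  under eq_bigr do rewrite coefMn /lam coef_poly hi.
  under [in RHS]eq_bigr do rewrite coefMn /lam coef_poly hi.
  case: i hi => [|i] hi.
    by rewrite add0r !big1 // => x _; rewrite /lamc /= mul0rn.
  rewrite /= hL // (eq_bigr _ (fun x _ => int_split x.2 _)) sumrB -!big_mkcond /=.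
  by rewrite subrK.
have hW : eqK K (Dp (Z * Q)) ((Z * Q) * Lp).
  rewrite DpM.
  have := (eqK_add (eqK_mul hZ (eqK_refl K Q)) (eqK_mul (eqK_refl K Z) hQ)).
  move=> h1; apply: eqK_trans h1 _.
  have -> : Z * LL * Q + Z * (Q * Lq) = Z * Q * (LL + Lq) by ring.
  exact: eqK_mul (eqK_refl K _) hL'.
have Lp0 : Lp`_0 = 0.
  rewrite coef_sum big1 // => x _; by rewrite coefMn /lam coef_poly lamc0; case: (0 < K)%N; rewrite mul0rn.
have Q0 : Q`_0 = 1 by apply: coef0_prod => y hy _; apply: exp0; apply: fb0; apply: hr.
have P0 : P`_0 = 1 by apply: coef0_prod => y hy _; apply: exp0; apply: fb0; apply: hr.
have := @uniqK K _ _ _ Lp0 _ hW hP j (ltnSn j).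
rewrite coef0M Q0 P0 coef_poly /= zeta0 mulr1 => /(_ erefl).
rewrite coefM => <-; apply: eq_bigr => [[i hi]] _ /=.
by rewrite coef_poly hi.
Qed.



Lemma zeta1 L : zeta_coef L 1 = L 1.
Proof.
have := zeta_rec L 0; rewrite mul1r => ->.
by rewrite big_ord1 /= zeta0 mul1r.
Qed.

Lemma rep_has1 L s : L 1 != 0 -> zeta_rep L s -> 1%N \in [seq x.1.2 | x <- s].
Proof.
move=> hL [hok heq]; apply/negPn/negP => hn.
have hr : forall x, x \in s -> (1 < x.1.2)%N.
  move=> x hx; have := allP hok x hx; rewrite /factor_ok => /andP[h1 _].
  have h2 : x.1.2 != 1%N by apply: contra hn => /eqP <-; apply: map_f.
  by move: h1 h2; case: (x.1.2) => [|[|k]].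
have [p0 p1] : (pos_part s)`_0 = 1 /\ (pos_part s)`_1 = 0.
  by apply: coef01_prod => x hx _; apply: exp01; apply: fb01; apply: hr.
have [q0 q1] : (neg_part s)`_0 = 1 /\ (neg_part s)`_1 = 0.
  by apply: coef01_prod => x hx _; apply: exp01; apply: fb01; apply: hr.
have := heq 1%N; rewrite big_ord_recr big_ord1 /= subnn p1 q0 q1 mulr0 add0r mulr1 zeta1.
by move=> h; rewrite h eqxx in hL.
Qed.

Lemma rep_filter L s : all (fun x => 0 < x.1.2)%N s ->
  (forall i, (0 < i)%N -> L i = \sum_(x <- s) x.2%:~R * lamc x.1.1 x.1.2 i) ->
  zeta_rep L [seq x <- s | x.2 != 0].
Proof.
move=> hall hL; split.
  apply/allP => x; rewrite mem_filter => /andP[hx hxs].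
  by rewrite /factor_ok hx (allP hall x hxs).
have -> : pos_part [seq x <- s | x.2 != 0] = pos_part s.
  rewrite /pos_part big_filter_cond; apply: eq_bigl => x.
  by case: (x.2) => [[|k]|k].
have -> : neg_part [seq x <- s | x.2 != 0] = neg_part s.
  rewrite /neg_part big_filter_cond; apply: eq_bigl => x.
  by case: (x.2) => [[|k]|k].
exact: rep_ok.
Qed.

Lemma mem_map_filter (s : seq (bool * nat * int)) P r :
  r \in [seq x.1.2 | x <- [seq x <- s | P x]] -> r \in [seq x.1.2 | x <- s].
Proof.
by case/mapP => x; rewrite mem_filter => /andP[_ hx] ->; apply: map_f.
Qed.

Lemma lamc_t1 i : (0 < i)%N -> lamc true 1 i = -1.
Proof. by move=> hi; rewrite /lamc hi dvd1n /= divn1 opprK expr1n mulr1. Qed.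

Lemma lamc_f1 i : (0 < i)%N -> lamc false 1 i = if odd i then 1 else -1.
Proof.
move=> hi; rewrite /lamc hi dvd1n /= divn1 expr0 mulN1r -signr_odd.
by case: (odd i); rewrite ?expr1 ?expr0 ?opprK ?mulN1r ?mul1r ?mulN1r.
Qed.

Lemma lamc_t2 i : (0 < i)%N -> lamc true 2 i = if odd i then 0 else -2.
Proof.
move=> hi; rewrite /lamc hi dvdn2 /= opprK expr1n mulr1.
by case: (odd i).
Qed.

Lemma final (L : nat -> rat) (al be : nat) :
  (forall m, (0 < m)%N -> L m = if odd m then (2 * al)%:R else (2 * be)%:R) ->
  ((0 < al)%N -> forall r : nat, MPerL L r <-> r = 1%N) /\
  (al = 0%N -> forall r : nat, ~ MPerL L r).
Proof.
move=> hL; split.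
- move=> hal r; split.
  + move=> [_ h].
    pose s := [:: ((true, 1%N), - (al + be)%:Z); ((false, 1%N), al%:Z - be%:Z)].
    have : r \in [seq x.1.2 | x <- s].
      apply: mem_map_filter; apply: h; apply: rep_filter => // i hi.
      rewrite /s !big_cons big_nil /= lamc_t1 // lamc_f1 // hL //.
      rewrite !natrM intrN intrB.
      by case: (odd i); rewrite /=; ring.
    by rewrite /s !inE => /orP[] /eqP.
  + move=> ->; split.
      move=> h; have := h 1%N; rewrite zeta1 hL //= => /eqP.
      by rewrite pnatr_eq0; lia.
    move=> s hs; apply: rep_has1 hs.
    by rewrite hL //= pnatr_eq0; lia.
- move=> hal r [_ h].
  pose s1 := [:: ((true, 1%N), - be%:Z); ((false, 1%N), - be%:Z)].
  pose s2 := [:: ((true, 2%N), - be%:Z)].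
  have h1 : r \in [seq x.1.2 | x <- s1].
    apply: mem_map_filter; apply: h; apply: rep_filter => // i hi.
    rewrite /s1 !big_cons big_nil /= lamc_t1 // lamc_f1 // hL // hal.
    rewrite !natrM intrN.
    by case: (odd i); rewrite /=; ring.
  have h2 : r \in [seq x.1.2 | x <- s2].
    apply: mem_map_filter; apply: h; apply: rep_filter => // i hi.
    rewrite /s2 !big_cons big_nil /= lamc_t2 // hL // hal.
    rewrite !natrM intrN.
    by case: (odd i); rewrite /=; ring.
  by move: h1 h2; rewrite /s1 /s2 !inE => /orP[] /eqP -> /eqP.
Qed.



Lemma conj_pow k (P A : 'M[rat]_k) m : P \in unitmx ->
  (invmx P *m A *m P) ^+ m = invmx P *m A ^+ m *m P.
Proof.
move=> hP; elim: m => [|m IH].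
  by rewrite !expr0 mulmx1 mulVmx.
by rewrite !exprS -!mulmxE IH !mulmxA mulmxK.
Qed.

Lemma diag_pow k (d : 'rV[rat]_k) m : diag_mx d ^+ m = diag_mx (\row_j (d 0 j) ^+ m).
Proof.
elim: m => [|m IH].
  rewrite expr0; apply/matrixP => i j; rewrite !mxE.
  by case: (i == j).
rewrite exprS -mulmxE IH mulmx_diag; congr diag_mx; apply/rowP => j; rewrite !mxE exprS.
by [].
Qed.

Lemma tr_formula (l : nat) (n : 'I_l -> nat) (M : hom_data n) (a : 'I_l -> int) k m :
  basic_eigenvalues M a ->
  \tr (M k ^+ m) = \sum_(S in Sk n k) \prod_(i in S) ((a i)%:~R : rat) ^+ m.
Proof.
move=> hb; have [P [hP hD]] := hb k.
have hM : M k = invmx P *m diag_mx (\row_j \prod_(i in @enum_val _ (pred_of_set (Sk n k)) j) ((a i)%:~R : rat)) *m P.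
  by rewrite -hD !mulmxA mulVmx // mul1mx mulmxKV.
rewrite hM conj_pow // mxtrace_mulC mulmxA mulmxV // mul1mx diag_pow mxtrace_diag.
rewrite (big_enum_val (fun S : {set 'I_l} => \prod_(i in S) ((a i)%:~R : rat) ^+ m)) /=; apply: eq_bigr => j _.
by rewrite !mxE prodrXl.
Qed.

Lemma w_le (l : nat) (n : 'I_l -> nat) (S : {set 'I_l}) :
  (\sum_(i in S) n i <= topdeg n)%N.
Proof.
rewrite /topdeg big_mkcond /=; apply: leq_sum => i _.
by case: (i \in S).
Qed.

Lemma lef_formula (l : nat) (n : 'I_l -> nat) (M : hom_data n) (a : 'I_l -> int) m :
  basic_eigenvalues M a ->
  lefschetz M m = \prod_(i < l) (1 + (-1) ^+ (n i) * ((a i)%:~R : rat) ^+ m).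
Proof.
move=> hb; rewrite /lefschetz.
under eq_bigr do rewrite (tr_formula _ _ _ _ _ _ hb) mulr_sumr big_mkcond /=.
rewrite exchange_big /=.
have -> : \prod_(i < l) (1 + (-1) ^+ (n i) * ((a i)%:~R : rat) ^+ m) =
          \prod_(i < l) ((-1) ^+ (n i) * ((a i)%:~R : rat) ^+ m + 1).
  by apply: eq_bigr => i _; rewrite addrC.
rewrite bigA_distr /=; apply: eq_bigr => S _.
rewrite -[RHS]big_mkcond /= big_split /= prodrXr.
set w := (\sum_(i in S) n i)%N.
have hw : (w < (topdeg n).+1)%N by rewrite ltnS w_le.
rewrite (bigD1 (Ordinal hw)) //= [X in _ + X = _]big1 ?addr0.
  by rewrite /Sk in_set eqxx prodrXl.
move=> k hk; rewrite /Sk in_set.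
case: eqP => // hkw; move: hk.
by rewrite (_ : k = Ordinal hw) ?eqxx //; apply: val_inj.
Qed.

Lemma int_pm1 (x : int) m : (0 < m)%N -> x ^+ m = 1 -> x = 1 \/ x = -1.
Proof.
move=> hm h; have := congr1 (fun y : int => `|y|) h.
rewrite /= normrX normr1 => /eqP; rewrite pexpr_eq1 // => /eqP.
by case: x {h} => [[|[|k]]|[|k]] //= _; [left | right].
Qed.

Lemma a_pm1 (l : nat) (n : 'I_l -> nat) (M : hom_data n) (a : 'I_l -> int) i :
  quasi_unipotent M -> basic_eigenvalues M a -> a i = 1 \/ a i = -1.
Proof.
move=> hq hb.
pose k := n i.
have [P [hP hD]] := hb k.
have hS : [set i] \in Sk n k by rewrite /Sk in_set big_set1.
pose j0 := enum_rank_in hS [set i].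
have hj0 : enum_val j0 = [set i] by rewrite enum_rankK_in.
pose v : 'rV[rat]_#|Sk n k| := delta_mx 0 j0 *m P.
have hPM : P *m M k = diag_mx (\row_j \prod_(i0 in @enum_val _ (pred_of_set (Sk n k)) j) ((a i0)%:~R : rat)) *m P.
  by rewrite -hD mulmxKV.
have hv : v *m M k = ((a i)%:~R : rat) *: v.
  rewrite /v -mulmxA hPM mulmxA -rowE row_diag_mx -scalemxAl mxE hj0 big_set1.
  by [].
have hv0 : v != 0.
  apply/eqP => h0.
  have : delta_mx 0 j0 = v *m invmx P :> 'rV[rat]__ by rewrite /v mulmxK.
  rewrite h0 mul0mx => /matrixP /(_ 0 j0); rewrite !mxE !eqxx /=.
  by move/eqP; rewrite oner_eq0.
have hroot : root (char_poly (M k)) ((a i)%:~R : rat).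
  by rewrite -eigenvalue_root_char; apply/eigenvalueP; exists v.
have hroot' : root (char_poly (map_mx (ratr : rat -> algC) (M k))) ((a i)%:~R).
  by rewrite -map_char_poly -(ratr_int algC (a i)) rmorph_root.
have [m [hm hz]] := hq k _ hroot'.
apply: (int_pm1 _ m hm); apply/eqP; rewrite -(eqr_int algC) rmorphXn /= hz.
by [].
Qed.



Lemma prod_pm (l : nat) (c : 'I_l -> rat) : (0 < l)%N -> (forall i, c i = 1 \/ c i = -1) ->
  \prod_(i < l) (1 + c i) = ((2 * (if [forall i, c i == 1%R] then 2 ^ l.-1 else 0))%N)%:R.
Proof.
move=> hl hc; case: (boolP [forall i, c i == 1]) => h.
  under eq_bigr do rewrite (eqP (forallP h _)).
  rewrite prodr_const card_ord -expnS prednK // natrX.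
  by [].
move: h; rewrite negb_forall => /existsP [i hi].
rewrite muln0 (bigD1 i) //=.
by case: (hc i) hi => -> //; rewrite subrr mul0r.
Qed.

Lemma sign_pm k : ((-1) ^+ k : rat) = 1 \/ ((-1) ^+ k : rat) = -1.
Proof. by rewrite -signr_odd; case: (odd k); [right; rewrite expr1 | left; rewrite expr0]. Qed.

Theorem lemma3p2 (l : nat) (n : 'I_l -> nat) (M : hom_data n) (a : 'I_l -> int)
    (hl : (0 < l)%N)
    (hn1 : forall i : 'I_l, (1 <= n i)%N)
    (hninc : forall i j : 'I_l, (i < j)%N -> (n i < n j)%N)
    (hqu : quasi_unipotent M)
    (hbasic : basic_eigenvalues M a) :
  ((forall i : 'I_l, (-1) ^+ (n i) * a i = 1) ->
     forall r : nat, MPerL (lefschetz M) r <-> r = 1%N) /\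
  ((exists i : 'I_l, (-1) ^+ (n i) * a i = -1) ->
     forall r : nat, ~ MPerL (lefschetz M) r).
Proof.
have hpm : forall i, a i = 1 \/ a i = -1 by move=> i; exact: (a_pm1 _ _ _ _ i hqu hbasic).
pose ci (i : 'I_l) : rat := ((-1) ^+ (n i) * a i)%:~R.
pose al := (if [forall i, ci i == 1%R] then 2 ^ l.-1 else 0)%N.
pose be := (if [forall i, ((-1) ^+ (n i) : rat) == 1%R] then 2 ^ l.-1 else 0)%N.
have hci : forall i, ci i = 1 \/ ci i = -1.
  move=> i; rewrite /ci rmorphM rmorphXn /= rmorphN1.
  by case: (hpm i) => ->; rewrite ?mulr1 ?mulrN1 ?rmorphN1 ?mulr1 /=;
     case: (sign_pm (n i)) => ->; rewrite ?opprK; auto.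
have hL : forall m, (0 < m)%N -> lefschetz M m = if odd m then (2 * al)%:R else (2 * be)%:R.
  move=> m hm; rewrite (lef_formula _ _ _ _ _ hbasic).
  have hf : forall i, (-1) ^+ (n i) * ((a i)%:~R : rat) ^+ m =
                      if odd m then ci i else (-1) ^+ (n i).
    move=> i; rewrite /ci rmorphM rmorphXn /= rmorphN1.
    case: (hpm i) => ->; first by rewrite rmorph1 expr1n mulr1; case: (odd m).
    rewrite rmorphN1 -(signr_odd _ m); case: (odd m); rewrite ?expr1 ?expr0 ?mulr1 //.

  under eq_bigr do rewrite hf.
  case: (odd m).
    by rewrite prod_pm.
  by rewrite prod_pm // => i; apply: sign_pm.
have [ha hb] := final _ _ _ hL.
split.
  move=> h; apply: ha; rewrite /al.
  have -> : [forall i, ci i == 1] by apply/forallP => i; rewrite /ci h.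
  by rewrite expn_gt0.
move=> [i hi]; apply: hb; rewrite /al.
have -> : [forall i, ci i == 1] = false.
  apply/negbTE/forallP => H; have := H i; rewrite /ci hi rmorphN1.
  by rewrite -subr_eq0 -opprD oppr_eq0.
by [].
Qed.
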